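(* Let $n\ge1$, let $j_1,\dots,j_n\ge 1$ be integers, let $h_k\in D_{j_k}$ and let $i_k\ge 0$ be integers for $k=1,\dots,n$. Then: (i) if $\sum_{k=1}^n i_k/j_k>1$, then $h_1^{i_1}\cdots h_n^{i_n}=0$ in ${}^\bullet\mathbb{R}$; (ii) if $p\ge1$ is an integer with $\frac1p\le \sum_{k=1}^n i_k/j_k\le 1$, then $h_1^{i_1}\cdots h_n^{i_n}\in D_p$.
   Context: A function $x:\mathbb{R}\to\mathbb{R}$ is called nilpotent if there exists $k\in\mathbb{N}$ such that $|x(t)-x(0)|^k=o(t)$ as $t\to 0$; $\mathrm{Nil}$ denotes the set of all nilpotent functions. For $x,y\in\mathrm{Nil}$ write $x\sim y$ iff $x(t)=y(t)+o(t)$ as $t\to0$. ${}^\bullet\mathbb{R}:=\mathrm{Nil}/\sim$ is the commutative ring with operations induced by pointwise sum and product. $D:=\{h\in{}^\bullet\mathbb{R} : \limsup_{t\to0}|h(t)/t|<+\infty\}$, and for integers $k\ge1$, $D_k:=\{h\in{}^\bullet\mathbb{R} : h^k\in D\}$. *)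

(* Defs.v *)
From Stdlib Require Import Reals Lra.
Open Scope R_scope.

Definition little_o_t (f : R -> R) : Prop :=
  forall eps, 0 < eps -> exists delta, 0 < delta /\
    forall t, 0 < Rabs t < delta -> Rabs (f t) <= eps * Rabs t.

Definition Nil (x : R -> R) : Prop :=
  exists k : nat, little_o_t (fun t => Rabs (x t - x 0) ^ k).

(* x ~ y  iff  x(t) = y(t) + o(t);  equality in the Fermat reals *)
Definition fequiv (x y : R -> R) : Prop := little_o_t (fun t => x t - y t).

Definition limsup_bounded (h : R -> R) : Prop :=
  exists M, exists delta, 0 < delta /\
    forall t, 0 < Rabs t < delta -> Rabs (h t / t) <= M.

Definition inD (h : R -> R) : Prop := Nil h /\ limsup_bounded h.

Definition inDk (k : nat) (h : R -> R) : Prop :=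
  Nil h /\ inD (fun t => h t ^ k).

Fixpoint sum_lt (n : nat) (f : nat -> R) : R :=
  match n with O => 0 | S m => sum_lt m f + f m end.
Fixpoint prod_lt (n : nat) (f : nat -> R) : R :=
  match n with O => 1 | S m => prod_lt m f * f m end.

(* the pointwise representative of h_0^{i_0} ... h_{n-1}^{i_{n-1}} *)
Definition monomial (n : nat) (h : nat -> R -> R) (i : nat -> nat) : R -> R :=
  fun t => prod_lt n (fun k => h k t ^ i k).

(* Main.v *)
Require Import Defs.
From Stdlib Require Import Reals Lra Lia.
Open Scope R_scope.

Definition Bnd (g : R -> R) (J A : nat) : Prop :=
  exists C, 0 < C /\ exists d, 0 < d /\
    forall t, 0 < Rabs t < d -> Rabs (g t) ^ J <= C * Rabs t ^ A.

Lemma pow_small (x : R) (A B : nat) : 0 <= x <= 1 -> (B <= A)%nat -> x ^ A <= x ^ B.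
Proof.
  intros Hx HBA. replace A with (B + (A - B))%nat by lia. rewrite pow_add.
  assert (0 <= x ^ B) by (apply pow_le; lra).
  assert (x ^ (A - B) <= 1) by (rewrite <- (pow1 (A - B)); apply pow_incr; lra).
  assert (0 <= x ^ (A-B)) by (apply pow_le; lra). nra.
Qed.

Lemma pow_inv_lt (x y : R) (n : nat) : 0 <= y -> x ^ n < y ^ n -> 0 <= x -> x < y.
Proof.
  intros Hy H Hx. destruct (Rlt_or_le x y) as [|Hle]; auto.
  assert (y ^ n <= x ^ n) by (apply pow_incr; lra). lra.
Qed.

Lemma Bnd_weaken g J A B : Bnd g J A -> (B <= A)%nat -> Bnd g J B.
Proof.
  intros [C [HC [d [Hd H]]]] HBA. exists C; split; auto. exists (Rmin d 1); split.
  apply Rmin_pos; lra.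
  intros t Ht. assert (Ht1 := Rmin_r d 1). assert (Ht2 := Rmin_l d 1).
  eapply Rle_trans. apply H; lra.
  apply Rmult_le_compat_l; [lra|]. apply pow_small; auto. split; [apply Rabs_pos|lra].
Qed.

Lemma Bnd_mulJ g J A r : Bnd g J A -> Bnd g (J * r) (A * r).
Proof.
  intros [C [HC [d [Hd H]]]]. exists (C ^ r); split. apply pow_lt; auto.
  exists d; split; auto. intros t Ht. rewrite !pow_mult, <- Rpow_mult_distr.
  apply pow_incr. split. apply pow_le, Rabs_pos. auto.
Qed.

Lemma Bnd_pow g J A q : Bnd g J A -> Bnd (fun t => g t ^ q) J (A * q).
Proof.
  intros HB. destruct (Bnd_mulJ g J A q HB) as [C [HC [d [Hd H]]]].
  exists C; split; auto. exists d; split; auto. intros t Ht.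
  rewrite <- RPow_abs, <- pow_mult. replace (q * J)%nat with (J * q)%nat by lia. auto.
Qed.

Lemma Bnd_littleo g J : (1 <= J)%nat -> Bnd g J (J + 1) -> little_o_t g.
Proof.
  intros HJ [C [HC [d [Hd H]]]] eps Heps.
  assert (HeJ : 0 < eps ^ J) by (apply pow_lt; auto).
  exists (Rmin d (eps ^ J / C)); split. apply Rmin_pos; auto. apply Rdiv_lt_0_compat; auto.
  intros t Ht. assert (Ht1 := Rmin_r d (eps ^ J / C)). assert (Ht2 := Rmin_l d (eps ^ J / C)).
  assert (Hb := H t ltac:(lra)).
  left. apply (pow_inv_lt _ _ J).
  - apply Rmult_le_pos; [lra|apply Rabs_pos].
  - eapply Rle_lt_trans. apply Hb. rewrite pow_add, Rpow_mult_distr, pow_1.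
    assert (0 < Rabs t ^ J) by (apply pow_lt; lra).
    assert (C * Rabs t < eps ^ J).
    { assert (Rabs t < eps ^ J / C) by lra.
      apply (Rmult_lt_compat_l C) in H1; auto. unfold Rdiv in H1.
      rewrite Rmult_comm, (Rmult_comm (eps ^ J)), <- Rmult_assoc, Rinv_r in H1; lra. }
    nra.
  - apply Rabs_pos.
Qed.

Lemma Bnd_limsup g J : (1 <= J)%nat -> Bnd g J J -> limsup_bounded g.
Proof.
  intros HJ [C [HC [d [Hd H]]]]. exists (C + 1), d; split; auto. intros t Ht.
  assert (Hb := H t Ht). unfold Rdiv. rewrite Rabs_mult, Rabs_inv.
  assert (HK : C + 1 <= (C + 1) ^ J).
  { rewrite <- (pow_1 (C+1)) at 1. apply Rle_pow; [lra|lia]. }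
  assert (Hg : Rabs (g t) <= (C + 1) * Rabs t).
  { destruct (Rle_or_lt (Rabs (g t)) ((C + 1) * Rabs t)) as [|Hlt]; auto.
    assert (((C+1) * Rabs t) ^ J < Rabs (g t) ^ J).
    { destruct J as [|J']; [lia|]. simpl.
      assert (0 <= ((C+1) * Rabs t) ^ J') by (apply pow_le; apply Rmult_le_pos; [lra|apply Rabs_pos]).
      assert (((C+1) * Rabs t) ^ J' <= Rabs (g t) ^ J') by (apply pow_incr; split; [|lra]; apply Rmult_le_pos; [lra|apply Rabs_pos]).
      assert (0 < (C+1) * Rabs t) by (apply Rmult_lt_0_compat; lra).
      assert (0 < ((C+1) * Rabs t) ^ J') by (apply pow_lt; lra).
      set (X := (C+1) * Rabs t) in *. set (Y := Rabs (g t)) in *.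
      set (a := X ^ J') in *. set (b := Y ^ J') in *. nra. }
    rewrite Rpow_mult_distr in H0.
    assert (0 < Rabs t ^ J) by (apply pow_lt; lra). nra. }
  assert (0 < / Rabs t) by (apply Rinv_0_lt_compat; lra).
  apply (Rmult_le_compat_r (/ Rabs t)) in Hg; [|lra].
  rewrite Rmult_assoc, Rinv_r in Hg; lra.
Qed.

Lemma Bnd_zero g J : Nil g -> Bnd g J 1 -> g 0 = 0.
Proof.
  intros [k Hk] [C [HC [d [Hd H]]]].
  destruct (Req_dec (g 0) 0) as [|Hc]; auto. exfalso.
  set (c := Rabs (g 0) / 2).
  assert (Hcp : 0 < c) by (unfold c; assert (0 < Rabs (g 0)) by (apply Rabs_pos_lt; auto); lra).
  destruct (Hk 1 ltac:(lra)) as [d1 [Hd1 H1]].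
  assert (HcJ : 0 < c ^ J) by (apply pow_lt; auto).
  assert (Hck : 0 < c ^ k) by (apply pow_lt; auto).
  set (t := Rmin (Rmin d d1) (Rmin (c ^ k) (c ^ J / C)) / 2).
  assert (Hm : 0 < Rmin (Rmin d d1) (Rmin (c ^ k) (c ^ J / C))).
  { repeat apply Rmin_pos; auto. apply Rdiv_lt_0_compat; auto. }
  assert (Ht : 0 < t) by (unfold t; lra).
  assert (Hat : Rabs t = t) by (apply Rabs_right; lra).
  assert (Hle1 := Rmin_l (Rmin d d1) (Rmin (c ^ k) (c ^ J / C))).
  assert (Hle2 := Rmin_r (Rmin d d1) (Rmin (c ^ k) (c ^ J / C))).
  assert (Rmin d d1 <= d) by apply Rmin_l. assert (Rmin d d1 <= d1) by apply Rmin_r.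
  assert (Rmin (c ^ k) (c ^ J / C) <= c ^ k) by apply Rmin_l.
  assert (Rmin (c ^ k) (c ^ J / C) <= c ^ J / C) by apply Rmin_r.
  assert (Hb := H t ltac:(unfold t in *; lra)).
  assert (Hb1 := H1 t ltac:(unfold t in *; lra)). rewrite Hat in Hb, Hb1. rewrite pow_1 in Hb.
  assert (HCt : C * t < c ^ J).
  { assert (Hq : t < c ^ J / C) by (unfold t in *; lra).
    apply (Rmult_lt_compat_l C) in Hq; auto. unfold Rdiv in Hq.
    rewrite (Rmult_comm (c ^ J)), <- Rmult_assoc, Rinv_r in Hq; lra. }
  assert (Hgt : Rabs (g t) < c) by (apply (pow_inv_lt _ _ J); try lra; apply Rabs_pos).
  assert (Hd2 : c <= Rabs (g t - g 0)).
  { assert (Rabs (g 0) <= Rabs (g t) + Rabs (g t - g 0)).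
    { replace (g 0) with (g t - (g t - g 0)) at 1 by ring.
      eapply Rle_trans. apply Rabs_triang. rewrite Rabs_Ropp. lra. }
    unfold c in *; lra. }
  assert (c ^ k <= Rabs (g t - g 0) ^ k) by (apply pow_incr; lra).
  assert (t < c ^ k) by (unfold t in *; lra).
  rewrite Rabs_right in Hb1. lra. apply Rle_ge, pow_le, Rabs_pos.
Qed.
Lemma Bnd_of_inDk (j : nat) h : inDk j h -> Bnd h j 1.
Proof.
  intros [_ [_ [M [d [Hd H]]]]]. exists (Rabs M + 1); split. assert (0 <= Rabs M) by apply Rabs_pos; lra.
  exists d; split; auto. intros t Ht. assert (Hb := H t Ht).
  rewrite pow_1, RPow_abs.
  unfold Rdiv in Hb. rewrite Rabs_mult, Rabs_inv in Hb.
  assert (0 < Rabs t) by lra.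
  replace (Rabs (h t ^ j)) with (Rabs (h t ^ j) * / Rabs t * Rabs t) by (field; lra).
  assert (M <= Rabs M) by apply RRle_abs. nra.
Qed.

Lemma Bnd_step m hh J A jj ii : (1 <= J)%nat -> Bnd m J A -> Bnd hh jj 1 ->
  Bnd (fun t => m t * hh t ^ ii) (J * jj) (A * jj + ii * J).
Proof.
  intros HJ H1 H2.
  destruct (Bnd_mulJ _ _ _ jj H1) as [C1 [HC1 [d1 [Hd1 G1]]]].
  destruct (Bnd_mulJ _ _ _ (ii * J) H2) as [C2 [HC2 [d2 [Hd2 G2]]]].
  exists (C1 * C2); split. nra. exists (Rmin d1 d2); split. apply Rmin_pos; auto.
  intros t Ht. assert (Hm1 := Rmin_l d1 d2). assert (Hm2 := Rmin_r d1 d2).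
  specialize (G1 t ltac:(lra)). specialize (G2 t ltac:(lra)).
  rewrite Rabs_mult, <- RPow_abs, Rpow_mult_distr, <- pow_mult.
  replace (ii * (J * jj))%nat with (jj * (ii * J))%nat by lia.
  rewrite pow_add, Nat.mul_1_l in *.
  assert (0 <= Rabs (m t) ^ (J * jj)) by (apply pow_le, Rabs_pos).
  assert (0 <= Rabs (hh t) ^ (jj * (ii * J))) by (apply pow_le, Rabs_pos).
  replace (C1 * C2 * (Rabs t ^ (A * jj) * Rabs t ^ (ii * J))) with
    ((C1 * Rabs t ^ (A * jj)) * (C2 * Rabs t ^ (ii * J))) by ring.
  apply Rmult_le_compat; auto.
Qed.

Lemma main_bound n (j : nat -> nat) h (i : nat -> nat) :
  (forall k, (k < n)%nat -> (1 <= j k)%nat /\ Bnd (h k) (j k) 1) ->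
  exists J A, (1 <= J)%nat /\ INR A = sum_lt n (fun k => INR (i k) / INR (j k)) * INR J
    /\ Bnd (monomial n h i) J A.
Proof.
  induction n as [|n IH]; intros Hh.
  - exists 1%nat, 0%nat. split; [lia|]. split. simpl; ring.
    exists 1; split; [lra|]. exists 1; split; [lra|]. intros t _. unfold monomial; simpl.
    rewrite Rabs_R1. lra.
  - destruct IH as [J [A [HJ [HA HB]]]]. intros k Hk; apply Hh; lia.
    destruct (Hh n ltac:(lia)) as [Hjn Hbn].
    exists (J * j n)%nat, (A * j n + i n * J)%nat. split; [lia|]. split.
    + rewrite plus_INR, !mult_INR, HA. simpl.
      assert (0 < INR (j n)) by (apply lt_0_INR; lia). field. lra.
    + exact (Bnd_step _ _ _ _ _ _ HJ HB Hbn).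
Qed.

Lemma prod_zero n f k : (k < n)%nat -> f k = 0 -> prod_lt n f = 0.
Proof.
  induction n; intros Hk Hf. lia. simpl. destruct (Nat.eq_dec k n). subst. rewrite Hf; ring.
  rewrite IHn; [ring|lia|auto].
Qed.

Lemma sum_nz n f : sum_lt n f <> 0 -> exists k, (k < n)%nat /\ f k <> 0.
Proof.
  induction n; simpl; intros H. lra.
  destruct (Req_dec (f n) 0). destruct IHn as [k [Hk Hf]]. lra. exists k; split; auto.
  exists n; split; auto.
Qed.

Theorem mainTheorem4 (n : nat) (j : nat -> nat) (h : nat -> R -> R) (i : nat -> nat)
  (Hn : (1 <= n)%nat)
  (Hj : forall k, (k < n)%nat -> (1 <= j k)%nat)
  (Hh : forall k, (k < n)%nat -> inDk (j k) (h k)) :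
  (sum_lt n (fun k => INR (i k) / INR (j k)) > 1 ->
     fequiv (monomial n h i) (fun _ => 0)) /\
  (forall p : nat, (1 <= p)%nat ->
     / INR p <= sum_lt n (fun k => INR (i k) / INR (j k)) <= 1 ->
     inDk p (monomial n h i)).
Proof.
  destruct (main_bound n j h i) as [J [A [HJ [HA HB]]]].
  { intros k Hk. split; auto. apply Bnd_of_inDk; auto. }
  set (s := sum_lt n (fun k => INR (i k) / INR (j k))) in *.
  assert (HJr : 1 <= INR J) by (apply (le_INR 1); auto).
  split.
  - intros Hs. assert (HAJ : (J + 1 <= A)%nat).
    { assert (INR J < INR A) by (rewrite HA; nra). apply INR_lt in H. lia. }
    assert (Hl := Bnd_littleo _ _ HJ (Bnd_weaken _ _ _ _ HB HAJ)).
    intros eps Heps. destruct (Hl eps Heps) as [d [Hd H]]. exists d; split; auto.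
    intros t Ht. rewrite Rminus_0_r. auto.
  - intros p Hp [Hs1 _].
    assert (HPr : 1 <= INR p) by (apply (le_INR 1); auto).
    assert (HAp : (J <= A * p)%nat).
    { apply INR_le. rewrite mult_INR, HA.
      assert (1 <= s * INR p).
      { apply (Rmult_le_compat_r (INR p)) in Hs1; [|lra]. rewrite Rinv_l in Hs1; lra. }
      nra. }
    assert (HA1 : (1 <= A)%nat) by nia.
    assert (Hm0 : monomial n h i 0 = 0).
    { destruct (sum_nz n (fun k => INR (i k) / INR (j k))) as [k [Hk Hf]].
      { fold s. assert (0 < / INR p) by (apply Rinv_0_lt_compat; lra). lra. }
      unfold monomial. apply (prod_zero _ _ k Hk).
      assert (Hik : (0 < i k)%nat).
      { destruct (i k); [|lia]. exfalso. apply Hf. simpl. unfold Rdiv; ring. }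
      rewrite (Bnd_zero (h k) (j k)). apply pow_i; auto.
      apply Hh; auto. apply Bnd_of_inDk; auto. }
    assert (HNil : forall g K B, g 0 = 0 -> Bnd g K B -> (1 <= B)%nat -> Nil g).
    { intros g K B Hg0 Hg HB1.
      assert (Hg2 := Bnd_weaken _ _ _ 2 (Bnd_mulJ _ _ _ 2 Hg) ltac:(lia)).
      destruct Hg2 as [C [HC [d [Hd H]]]].
      exists (K * 2)%nat. intros eps Heps.
      exists (Rmin d (eps / C)); split. apply Rmin_pos; auto. apply Rdiv_lt_0_compat; auto.
      intros t Ht. assert (Hm1 := Rmin_l d (eps / C)). assert (Hm2 := Rmin_r d (eps / C)).
      rewrite Hg0, Rminus_0_r. rewrite Rabs_right by (apply Rle_ge, pow_le, Rabs_pos).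
      eapply Rle_trans. apply H; lra.
      assert (HCt : C * Rabs t <= eps).
      { assert (Hq : Rabs t <= eps / C) by lra.
        apply (Rmult_le_compat_l C) in Hq; [|lra]. unfold Rdiv in Hq.
        rewrite (Rmult_comm eps), <- Rmult_assoc, Rinv_r in Hq; lra. }
      simpl. assert (0 < Rabs t) by lra. nra. }
    split; [|split].
    + apply (HNil _ J A Hm0 HB HA1).
    + apply (HNil _ J (A * p)%nat). rewrite Hm0. apply pow_i; lia.
      apply Bnd_pow; auto. lia.
    + apply (Bnd_limsup _ J HJ). apply (Bnd_weaken _ _ (A * p)); auto. apply Bnd_pow; auto.
Qed.
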